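(* Let $(Y,d)$ be a length space and $y_0\in Y$. Equip $Y\times\mathbb{R}$ with the product metric $\big((y,t),(y',t')\big)\mapsto\sqrt{d(y,y')^2+|t-t'|^2}$, and let $B_{(y_0,0)}(s)$ denote the open ball of radius $s$ about $(y_0,0)$ in this metric. If $L>0$ and $0<r<\min\{\tfrac12\mathrm{Diam}(Y,d),\,L\}$, then $B_{(y_0,0)}(L)-B_{(y_0,0)}(r)$ is path connected.
   Context: A metric space $(Y,d)$ is called a length space if for all $x,y\in Y$ there is a path $\gamma_0$ from $x$ to $y$ whose length (the supremum over partitions $a=t_0<\dots<t_n=b$ of $\sum_i d(\gamma(t_i),\gamma(t_{i+1}))$) equals $d(x,y)<\infty$. $\mathrm{Diam}(Y,d)$ may be $+\infty$. *)

(* Defs.v *)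
From Stdlib Require Import Reals.
From Coquelicot Require Import Coquelicot.
Open Scope R_scope.

Definition is_metric {Y : Type} (d : Y -> Y -> R) : Prop :=
  (forall x y, 0 <= d x y) /\
  (forall x y, d x y = 0 <-> x = y) /\
  (forall x y, d x y = d y x) /\
  (forall x y z, d x z <= d x y + d y z).

Definition continuous_on_interval {Y : Type} (d : Y -> Y -> R)
    (a b : R) (g : R -> Y) : Prop :=
  forall t, a <= t <= b -> forall eps, 0 < eps ->
    exists delta, 0 < delta /\
      forall s, a <= s <= b -> Rabs (s - t) < delta -> d (g s) (g t) < eps.

Definition is_path {Y : Type} (d : Y -> Y -> R) (a b : R) (g : R -> Y)
    (x y : Y) : Prop :=
  a <= b /\ continuous_on_interval d a b g /\ g a = x /\ g b = y.

Definition is_partition (a b : R) (t : nat -> R) (n : nat) : Prop :=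
  t 0%nat = a /\ t n = b /\ (forall i, (i < n)%nat -> t i < t (S i)).

Fixpoint partition_sum {Y : Type} (d : Y -> Y -> R) (g : R -> Y)
    (t : nat -> R) (n : nat) : R :=
  match n with
  | O => 0
  | S k => partition_sum d g t k + d (g (t k)) (g (t (S k)))
  end.

Definition path_length {Y : Type} (d : Y -> Y -> R) (a b : R) (g : R -> Y)
  : Rbar :=
  Lub_Rbar (fun s => exists (t : nat -> R) (n : nat),
                is_partition a b t n /\ s = partition_sum d g t n).

Definition is_length_space {Y : Type} (d : Y -> Y -> R) : Prop :=
  is_metric d /\
  forall x y : Y, exists (a b : R) (g : R -> Y),
    is_path d a b g x y /\ path_length d a b g = Finite (d x y).

Definition Diam {Y : Type} (d : Y -> Y -> R) : Rbar :=
  Lub_Rbar (fun s => exists x y : Y, s = d x y).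

Definition YR_dist {Y : Type} (d : Y -> Y -> R) (p q : Y * R) : R :=
  sqrt (d (fst p) (fst q) ^ 2 + Rabs (snd p - snd q) ^ 2).

Definition YR_ball {Y : Type} (d : Y -> Y -> R) (c : Y * R) (s : R)
  : Y * R -> Prop :=
  fun p => YR_dist d c p < s.

Definition path_connected {Y : Type} (d : Y -> Y -> R) (A : Y * R -> Prop)
  : Prop :=
  forall p q, A p -> A q ->
    exists g : R -> Y * R,
      is_path (YR_dist d) 0 1 g p q /\
      (forall t, 0 <= t <= 1 -> A (g t)).

(* Main.v *)
Require Import Defs.
From Stdlib Require Import Reals Lra Lia Classical.
From Coquelicot Require Import Coquelicot.
Open Scope R_scope.

Definition Rd (x y : R) : R := Rabs (x - y).

Lemma cpt_eps (f : R -> R) x : continuity_pt f x ->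
  forall eps, 0 < eps -> exists delta, 0 < delta /\
   forall y, Rabs (y - x) < delta -> Rabs (f y - f x) < eps.
Proof.
  intros H eps He. destruct (H eps He) as [a [Ha Hb]]. exists a; split; auto.
  intros y Hy. destruct (Req_dec y x) as [->|Hne].
  - unfold Rminus; rewrite Rplus_opp_r, Rabs_R0; lra.
  - apply (Hb y). split; [unfold D_x, no_cond; auto | simpl; unfold R_dist; auto].
Qed.

Lemma cont_ext {X} (dX : X -> X -> R) a b g h :
  continuous_on_interval dX a b g -> (forall s, a <= s <= b -> g s = h s) ->
  continuous_on_interval dX a b h.
Proof.
  intros H E t Ht eps He. destruct (H t Ht eps He) as [dl [Hd1 Hd2]].
  exists dl; split; auto. intros s Hs Hst. rewrite <- !E by auto. auto.
Qed.

Lemma cont_comp {X} (dX : X -> X -> R) a b c e (phi : R -> R) (g : R -> X) :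
  continuous_on_interval Rd a b phi -> (forall t, a <= t <= b -> c <= phi t <= e) ->
  continuous_on_interval dX c e g ->
  continuous_on_interval dX a b (fun t => g (phi t)).
Proof.
  intros Hp Hr Hg t Ht eps He.
  destruct (Hg (phi t) (Hr t Ht) eps He) as [d1 [Hd1 Hd2]].
  destruct (Hp t Ht d1 Hd1) as [d2 [Hd3 Hd4]].
  exists d2; split; auto. intros s Hs Hst. apply Hd2; auto. apply Hd4; auto.
Qed.

Lemma cont_affine a b u v : continuous_on_interval Rd a b (fun s => u + s * v).
Proof.
  intros t Ht eps He. exists (eps / (Rabs v + 1)). split.
  { apply Rdiv_lt_0_compat; auto. pose proof (Rabs_pos v); lra. }
  intros s Hs Hst. unfold Rd.
  replace (u + s * v - (u + t * v)) with ((s - t) * v) by ring.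
  rewrite Rabs_mult. pose proof (Rabs_pos v). pose proof (Rabs_pos (s-t)).
  apply Rlt_le_trans with (eps / (Rabs v + 1) * (Rabs v + 1)).
  - apply Rle_lt_trans with (Rabs (s - t) * (Rabs v + 1)). nra.
    apply Rmult_lt_compat_r; lra.
  - field_simplify; lra.
Qed.

Lemma cont_const {X} (dX : X -> X -> R) a b (x : X) :
  dX x x = 0 -> continuous_on_interval dX a b (fun _ => x).
Proof. intros H t Ht eps He. exists 1; split; [lra|]. intros; rewrite H; lra. Qed.

Lemma cont_dist {Y} (d : Y -> Y -> R) a b y0 g : is_metric d ->
  continuous_on_interval d a b g ->
  continuous_on_interval Rd a b (fun s => d y0 (g s)).
Proof.
  intros [M1 [M2 [M3 M4]]] H t Ht eps He. destruct (H t Ht eps He) as [dl [H1 H2]].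
  exists dl; split; auto. intros s Hs Hst. specialize (H2 s Hs Hst). unfold Rd.
  pose proof (M4 y0 (g s) (g t)). pose proof (M4 y0 (g t) (g s)).
  rewrite (M3 (g t) (g s)) in H3. apply Rabs_def1; lra.
Qed.

Lemma cont_Rfun a b (f phi : R -> R) :
  (forall t, a <= t <= b -> continuity_pt f (phi t)) ->
  continuous_on_interval Rd a b phi ->
  continuous_on_interval Rd a b (fun t => f (phi t)).
Proof.
  intros Hf Hp t Ht eps He.
  destruct (cpt_eps f (phi t) (Hf t Ht) eps He) as [d1 [Hd1 Hd2]].
  destruct (Hp t Ht d1 Hd1) as [d2 [Hd3 Hd4]].
  exists d2; split; auto. intros s Hs Hst. apply Hd2. apply Hd4; auto.
Qed.

Lemma sqrt_sum_le x y : 0 <= x -> 0 <= y -> sqrt (x ^ 2 + y ^ 2) <= x + y.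
Proof.
  intros. rewrite <- (sqrt_pow2 (x + y)) by lra. apply sqrt_le_1_alt. nra.
Qed.

Lemma cont_pair {Y} (d : Y -> Y -> R) a b g1 g2 : is_metric d ->
  continuous_on_interval d a b g1 -> continuous_on_interval Rd a b g2 ->
  continuous_on_interval (YR_dist d) a b (fun s => (g1 s, g2 s)).
Proof.
  intros [M1 _] H1 H2 t Ht eps He.
  destruct (H1 t Ht (eps/2)) as [d1 [Hd1 Hd2]]; [lra|].
  destruct (H2 t Ht (eps/2)) as [d2 [Hd3 Hd4]]; [lra|].
  exists (Rmin d1 d2); split; [apply Rmin_pos; auto|].
  intros s Hs Hst. unfold YR_dist; simpl.
  pose proof (Rmin_l d1 d2); pose proof (Rmin_r d1 d2).
  eapply Rle_lt_trans; [apply sqrt_sum_le; [apply M1|apply Rabs_pos]|].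
  specialize (Hd2 s Hs ltac:(lra)). specialize (Hd4 s Hs ltac:(lra)). unfold Rd in Hd4. lra.
Qed.

Lemma cont_glue {X} (dX : X -> X -> R) a b c g :
  continuous_on_interval dX a b g -> continuous_on_interval dX b c g ->
  continuous_on_interval dX a c g.
Proof.
  intros H1 H2 t Ht eps He.
  destruct (Rlt_le_dec t b) as [Hlt|Hge].
  - destruct (H1 t ltac:(lra) eps He) as [d1 [Hd1 Hd2]].
    exists (Rmin d1 (b - t)); split; [apply Rmin_pos; lra|].
    intros s Hs Hst. pose proof (Rmin_l d1 (b-t)); pose proof (Rmin_r d1 (b-t)).
    apply Hd2; [|lra]. split; [lra|]. apply Rabs_def2 in Hst; lra.
  - destruct (Rle_lt_or_eq_dec b t Hge) as [Hgt|Heq].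
    + destruct (H2 t ltac:(lra) eps He) as [d1 [Hd1 Hd2]].
      exists (Rmin d1 (t - b)); split; [apply Rmin_pos; lra|].
      intros s Hs Hst. pose proof (Rmin_l d1 (t-b)); pose proof (Rmin_r d1 (t-b)).
      apply Hd2; [|lra]. split; [|lra]. apply Rabs_def2 in Hst; lra.
    + subst t. destruct (H1 b ltac:(lra) eps He) as [d1 [Hd1 Hd2]].
      destruct (H2 b ltac:(lra) eps He) as [d2 [Hd3 Hd4]].
      exists (Rmin d1 d2); split; [apply Rmin_pos; lra|].
      intros s Hs Hst. pose proof (Rmin_l d1 d2); pose proof (Rmin_r d1 d2).
      destruct (Rle_dec s b); [apply Hd2|apply Hd4]; lra.
Qed.

Section C.
Context {Y : Type} (d : Y -> Y -> R) (Hm : is_metric d) (A : Y * R -> Prop).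

Lemma YR_self p : YR_dist d p p = 0.
Proof.
  destruct Hm as [_ [M2 _]]. unfold YR_dist.
  rewrite (proj2 (M2 _ _) eq_refl). unfold Rminus; rewrite Rplus_opp_r, Rabs_R0.
  replace (0 ^ 2 + 0 ^ 2) with 0 by ring. apply sqrt_0.
Qed.

Definition conn p q := exists g : R -> Y * R,
  is_path (YR_dist d) 0 1 g p q /\ (forall t, 0 <= t <= 1 -> A (g t)).

Lemma path_to_conn a b g p q : is_path (YR_dist d) a b g p q ->
  (forall t, a <= t <= b -> A (g t)) -> conn p q.
Proof.
  intros [Hab [Hc [Ha Hb]]] HA.
  exists (fun s => g (a + s * (b - a))). split; [split; [lra|split]|].
  - eapply cont_comp; [apply cont_affine| |exact Hc]. intros; nra.
  - split; [rewrite Rmult_0_l, Rplus_0_r; auto|].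
    replace (a + 1 * (b - a)) with b by ring; auto.
  - intros t Ht. apply HA. nra.
Qed.

Lemma conn_refl p : A p -> conn p p.
Proof.
  intros HA. exists (fun _ => p). split; [split; [lra|split; [apply cont_const, YR_self|auto]]|auto].
Qed.

Lemma conn_sym p q : conn p q -> conn q p.
Proof.
  intros [g [[_ [Hc [Ha Hb]]] HA]]. exists (fun s => g (1 + s * (-1))).
  split; [split; [lra|split]|].
  - eapply cont_comp; [apply cont_affine| |exact Hc]. intros; lra.
  - split; [replace (1 + 0 * -1) with 1 by ring; auto|replace (1 + 1 * -1) with 0 by ring; auto].
  - intros; apply HA; lra.
Qed.

Lemma conn_trans p q r : conn p q -> conn q r -> conn p r.
Proof.
  intros [g1 [[_ [Hc1 [Ha1 Hb1]]] HA1]] [g2 [[_ [Hc2 [Ha2 Hb2]]] HA2]].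
  exists (fun s => if Rle_dec s (1/2) then g1 (0 + s * 2) else g2 ((-1) + s * 2)).
  split; [split; [lra|split]|].
  - apply cont_glue with (1/2).
    + apply cont_ext with (fun s => g1 (0 + s * 2)).
      * eapply cont_comp; [apply cont_affine| |exact Hc1]. intros; lra.
      * intros s Hs. destruct (Rle_dec s (1/2)); [auto|lra].
    + apply cont_ext with (fun s => g2 ((-1) + s * 2)).
      * eapply cont_comp; [apply cont_affine| |exact Hc2]. intros; lra.
      * intros s Hs. destruct (Rle_dec s (1/2)); [|auto].
        assert (s = 1/2) by lra. subst s.
        replace (0 + 1/2*2) with 1 by field. replace (-1 + 1/2*2) with 0 by field.
        congruence.
  - split.
    + destruct (Rle_dec 0 (1/2)); [|lra]. rewrite Rmult_0_l, Rplus_0_r; auto.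
    + destruct (Rle_dec 1 (1/2)); [lra|]. replace (-1 + 1*2) with 1 by ring; auto.
  - intros t Ht. destruct (Rle_dec t (1/2)); [apply HA1|apply HA2]; lra.
Qed.

Definition refl (p : Y * R) : Y * R := (fst p, - snd p).

Lemma YR_refl p q : YR_dist d (refl p) (refl q) = YR_dist d p q.
Proof.
  unfold YR_dist, refl; simpl. replace (- snd p - - snd q) with (-(snd p - snd q)) by ring.
  rewrite Rabs_Ropp; auto.
Qed.

Lemma conn_refl_map p q : (forall x, A x -> A (refl x)) -> conn p q -> conn (refl p) (refl q).
Proof.
  intros HR [g [[_ [Hc [Ha Hb]]] HA]]. exists (fun s => refl (g s)).
  split; [split; [lra|split]|].
  - intros t Ht eps He. destruct (Hc t Ht eps He) as [dl [H1 H2]]. exists dl; split; auto.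
    intros; rewrite YR_refl; auto.
  - rewrite Ha, Hb; auto.
  - intros; apply HR, HA; auto.
Qed.

End C.

Lemma geo {Y} (d : Y -> Y -> R) a b g x y : is_metric d -> is_path d a b g x y ->
  path_length d a b g = Finite (d x y) ->
  forall s, a <= s <= b -> d x (g s) + d (g s) y <= d x y.
Proof.
  intros [M1 [M2 [M3 M4]]] [Hab [Hc [Ha Hb]]] Hl s Hs.
  destruct (Req_dec s a) as [->|Hna].
  { rewrite Ha, (proj2 (M2 x x) eq_refl); lra. }
  destruct (Req_dec s b) as [->|Hnb].
  { rewrite Hb, (proj2 (M2 y y) eq_refl); lra. }
  destruct (Lub_Rbar_correct (fun s0 => exists (t : nat -> R) (n : nat),
                is_partition a b t n /\ s0 = partition_sum d g t n)) as [Hub _].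
  unfold path_length in Hl. rewrite Hl in Hub.
  set (t := fun i : nat => match i with O => a | 1%nat => s | _ => b end).
  specialize (Hub (partition_sum d g t 2)).
  assert (H : Rbar_le (partition_sum d g t 2) (d x y)).
  { apply Hub. exists t, 2%nat. split; auto. split; [auto|split; [auto|]].
    intros i Hi. destruct i as [|[|i]]; simpl; lra || lia. }
  simpl in H. rewrite Ha, Hb in H. lra.
Qed.

Lemma clamp_in a b x : a <= b -> a <= Rmax a (Rmin b x) <= b.
Proof. intros. unfold Rmax, Rmin; repeat destruct Rle_dec; lra. Qed.
Lemma clamp_id a b x : a <= x <= b -> Rmax a (Rmin b x) = x.
Proof. intros. unfold Rmax, Rmin; repeat destruct Rle_dec; lra. Qed.
Lemma clamp_lip a b x y : Rabs (Rmax a (Rmin b x) - Rmax a (Rmin b y)) <= Rabs (x - y).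
Proof. unfold Rmax, Rmin, Rabs; repeat destruct Rle_dec; repeat destruct Rcase_abs; lra. Qed.

Lemma ivt a b f r : a <= b -> continuous_on_interval Rd a b f -> f a < r -> r < f b ->
  exists s, a <= s <= b /\ f s = r.
Proof.
  intros Hab Hc Ha Hb.
  assert (Hlt : a < b). { destruct (Req_dec a b); [subst; lra|lra]. }
  set (F := fun x => f (Rmax a (Rmin b x)) - r).
  assert (HF : forall x, a <= x <= b -> continuity_pt F x).
  { intros x _ eps He. destruct (Hc _ (clamp_in a b x Hab) eps He) as [dl [H1 H2]].
    exists dl; split; auto. intros x' [_ Hx']. simpl in *. unfold R_dist in *. unfold F.
    replace (f (Rmax a (Rmin b x')) - r - (f (Rmax a (Rmin b x)) - r))
      with (f (Rmax a (Rmin b x')) - f (Rmax a (Rmin b x))) by ring.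
    apply H2; [apply clamp_in; auto|]. eapply Rle_lt_trans; [apply clamp_lip|auto]. }
  destruct (Ranalysis5.IVT_interv F a b HF Hlt) as [z [Hz Fz]].
  - unfold F; rewrite clamp_id; lra.
  - unfold F; rewrite clamp_id; lra.
  - exists z; split; auto. unfold F in Fz; rewrite clamp_id in Fz; lra.
Qed.

Lemma diam_big {Y} (d : Y -> Y -> R) r :
  Rbar_lt (Finite r) (Rbar_mult (/ 2) (Diam d)) -> exists x y, 2 * r < d x y.
Proof.
  intros H. apply NNPP; intros Hn.
  assert (Hle : Rbar_le (Diam d) (Finite (2 * r))).
  { unfold Diam. apply (proj2 (Lub_Rbar_correct _)). intros s [x [y ->]].
    simpl. apply Rnot_lt_le. intros Hl; apply Hn; eauto. }
  destruct (Diam d) as [l| |]; simpl in *.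
  - lra.
  - auto.
  - revert H. unfold Rbar_mult, Rbar_mult'. destruct (Rle_dec 0 (/2)); [|simpl; intros; lra].
    destruct (Rle_lt_or_eq_dec 0 (/2) r0); simpl; auto; lra.
Qed.

Section M.
Context {Y : Type} (d : Y -> Y -> R) (Hm : is_metric d) (y0 : Y) (L r : R).
Let A := fun p => YR_ball d (y0, 0) L p /\ ~ YR_ball d (y0, 0) r p.
Let rad p := YR_dist d (y0, 0) p.

Lemma rad_eq y t : rad (y, t) = sqrt (d y0 y ^ 2 + t ^ 2).
Proof. unfold rad, YR_dist; cbn [fst snd]. rewrite pow2_abs. f_equal; ring. Qed.

Lemma radial y t0 a b g : 0 <= t0 -> A (y, t0) -> is_path d a b g y y0 ->
  path_length d a b g = Finite (d y y0) -> conn d A (y, t0) (y0, rad (y, t0)).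
Proof.
  intros Ht0 HA Hp Hl. pose proof Hm as [M1 [M2 [M3 M4]]].
  pose proof (geo d a b g y y0 Hm Hp Hl) as G.
  set (rho := rad (y, t0)).
  assert (Hrho : rho ^ 2 = d y0 y ^ 2 + t0 ^ 2).
  { unfold rho; rewrite rad_eq, pow2_sqrt; auto. pose proof (M1 y0 y); nra. }
  assert (Hr0 : 0 <= rho) by (unfold rho, rad, YR_dist; apply sqrt_pos).
  assert (HD : forall s, a <= s <= b -> 0 <= d y0 (g s) <= rho).
  { intros s Hs. specialize (G s Hs). rewrite (M3 (g s) y0) in G.
    pose proof (M1 y (g s)); pose proof (M1 y0 (g s)); pose proof (M1 y0 y).
    rewrite (M3 y y0) in G. split; auto.
    assert (d y0 (g s) ^ 2 <= rho ^ 2) by nra. nra. }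
  destruct Hp as [Hab [Hc [Ha Hb]]].
  apply path_to_conn with a b (fun s => (g s, sqrt (rho ^ 2 - d y0 (g s) ^ 2))).
  - split; [auto|split; [|split]].
    + apply cont_pair; auto.
      apply (cont_Rfun a b (fun x => sqrt (rho ^ 2 - x ^ 2)) (fun s => d y0 (g s))).
      * intros t Ht. specialize (HD t Ht).
        change (continuity_pt (comp sqrt (fun x => rho ^ 2 - x ^ 2)) (d y0 (g t))).
        apply continuity_pt_comp.
        -- apply derivable_continuous_pt; reg.
        -- apply continuity_pt_sqrt. nra.
      * apply cont_dist; auto.
    + rewrite Ha. f_equal. replace (rho ^ 2 - d y0 y ^ 2) with (t0 ^ 2) by lra.
      apply sqrt_pow2; auto.
    + rewrite Hb. rewrite (proj2 (M2 y0 y0) eq_refl). f_equal.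
      replace (rho ^ 2 - 0 ^ 2) with (rho ^ 2) by ring. apply sqrt_pow2; auto.
  - intros s Hs. specialize (HD s Hs).
    assert (E : rad (g s, sqrt (rho ^ 2 - d y0 (g s) ^ 2)) = rho).
    { rewrite rad_eq, pow2_sqrt by nra.
      replace (d y0 (g s) ^ 2 + (rho ^ 2 - d y0 (g s) ^ 2)) with (rho ^ 2) by ring.
      apply sqrt_pow2; auto. }
    destruct HA as [HA1 HA2]. unfold A, YR_ball. fold (rad (g s, sqrt (rho ^ 2 - d y0 (g s) ^ 2))).
    rewrite E. exact (conj HA1 HA2).
Qed.

Lemma vertical u v : 0 <= r -> r <= u < L -> r <= v < L -> conn d A (y0, u) (y0, v).
Proof.
  intros Hr Hu Hv. pose proof Hm as [M1 [M2 [M3 M4]]].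
  apply path_to_conn with 0 1 (fun s => (y0, u + s * (v - u))).
  - split; [lra|split; [|split]].
    + apply cont_pair; auto. apply cont_const. apply M2; auto. apply cont_affine.
    + f_equal; ring.
    + f_equal; ring.
  - intros s Hs. unfold A, YR_ball. fold (rad (y0, u + s * (v - u))).
    rewrite rad_eq, (proj2 (M2 y0 y0) eq_refl).
    replace (0 ^ 2 + (u + s * (v - u)) ^ 2) with ((u + s * (v - u)) ^ 2) by ring.
    assert (r <= u + s * (v - u) < L).
    { destruct (Rle_dec u v).
      - assert (0 <= s * (v - u) <= 1 * (v - u)) by (split; apply Rmult_le_compat_r || apply Rmult_le_pos; lra). lra.
      - assert (0 <= s * (u - v) <= 1 * (u - v)) by (split; apply Rmult_le_compat_r || apply Rmult_le_pos; lra). lra. }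
    rewrite sqrt_pow2 by lra. split; lra.
Qed.

End M.

Lemma rad_refl {Y} (d : Y -> Y -> R) y0 y t :
  YR_dist d (y0, 0) (y, - t) = YR_dist d (y0, 0) (y, t).
Proof.
  unfold YR_dist; cbn [fst snd]. replace (0 - - t) with (- (0 - t)) by ring.
  rewrite Rabs_Ropp; auto.
Qed.

Theorem mainTheorem4 (Y : Type) (d : Y -> Y -> R) (y0 : Y) (L r : R) :
  is_length_space d ->
  0 < L ->
  0 < r ->
  Rbar_lt (Finite r) (Rbar_mult (/ 2) (Diam d)) ->
  r < L ->
  path_connected d
    (fun p => YR_ball d (y0, 0) L p /\ ~ YR_ball d (y0, 0) r p).
Proof.
  intros [Hm Hgeo] HL Hr Hdiam HrL.
  pose proof Hm as [M1 [M2 [M3 M4]]].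
  set (A := fun p => YR_ball d (y0, 0) L p /\ ~ YR_ball d (y0, 0) r p).
  assert (HR : forall x, A x -> A (refl x)).
  { intros [y t]. unfold A, YR_ball, refl. cbn [fst snd]. rewrite rad_refl. auto. }
  assert (Hy1 : exists y1, d y0 y1 = r).
  { destruct (diam_big d r Hdiam) as [x [y Hxy]].
    assert (exists y2, r < d y0 y2) as [y2 Hy2].
    { pose proof (M4 x y0 y). rewrite (M3 x y0) in H.
      destruct (Rlt_dec r (d y0 x)); [exists x; auto|exists y; lra]. }
    destruct (Hgeo y0 y2) as [a [b [g [Hp Hl]]]].
    pose proof Hp as [Hab [Hc [Ha Hb]]].
    destruct (ivt a b (fun s => d y0 (g s)) r Hab (cont_dist d a b y0 g Hm Hc)) as [s [_ Hs]].
    - rewrite Ha, (proj2 (M2 y0 y0) eq_refl); lra.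
    - rewrite Hb; lra.
    - exists (g s); auto. }
  destruct Hy1 as [y1 Hy1].
  set (N := (y0, r)).
  assert (HE : YR_dist d (y0, 0) (y1, 0) = r).
  { unfold YR_dist; cbn [fst snd]. rewrite Hy1. unfold Rminus; rewrite Rplus_opp_r, Rabs_R0.
    replace (r ^ 2 + 0 ^ 2) with (r ^ 2) by ring. apply sqrt_pow2; lra. }
  assert (HAE : A (y1, 0)).
  { unfold A, YR_ball. rewrite HE. split; lra. }
  destruct (Hgeo y1 y0) as [a1 [b1 [g1 [Hp1 Hl1]]]].
  pose proof (radial d Hm y0 L r y1 0 a1 b1 g1 (Rle_refl 0) HAE Hp1 Hl1) as C1.
  cbv beta in C1. rewrite HE in C1.
  assert (HS : conn d A (y0, - r) N).
  { pose proof (conn_refl_map d A _ _ HR C1) as C2. unfold refl in C2; cbn [fst snd] in C2.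
    rewrite Ropp_0 in C2. apply conn_sym in C2. eapply conn_trans; [exact C2|exact C1]. }
  assert (Key : forall p, A p -> conn d A N p).
  { intros [y t] HA. set (rho := YR_dist d (y0, 0) (y, t)).
    assert (Hrho : r <= rho < L) by (destruct HA as [H1 H2]; unfold YR_ball in *; fold rho in H1, H2; lra).
    destruct (Hgeo y y0) as [a [b [g [Hp Hl]]]].
    destruct (Rle_dec 0 t) as [Ht|Ht].
    - pose proof (radial d Hm y0 L r y t a b g Ht HA Hp Hl) as C. cbv beta in C. fold rho in C.
      apply conn_sym. eapply conn_trans; [exact C|].
      apply vertical; auto; lra.
    - assert (HA' : A (y, - t)) by (apply (HR (y, t)); auto).
      pose proof (radial d Hm y0 L r y (- t) a b g ltac:(lra) HA' Hp Hl) as C.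
      rewrite rad_refl in C. cbv beta in C. fold rho in C.
      assert (C3 : conn d A (y, - t) (y0, r)).
      { eapply conn_trans; [exact C|]. apply vertical; auto; lra. }
      pose proof (conn_refl_map d A _ _ HR C3) as C4. unfold refl in C4; cbn [fst snd] in C4.
      rewrite Ropp_involutive in C4.
      apply conn_sym. eapply conn_trans; [exact C4|exact HS]. }
  intros p q Hp Hq. fold A in Hp, Hq |- *.
  apply (conn_trans d A p N q); [apply conn_sym, Key; auto|apply Key; auto].
Qed.
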